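(* Let $k\ge2$. Let $\alpha(x)=\forall y\,([y^{-1}xy,x]=e)$, $\beta(y)=\forall x\,(\alpha(x)\rightarrow y^{-1}xy=x^k)$, and let $\gamma(x,y,z,t)$ be a group formula such that for every $b_1\in Ab$ and all $n,l,m\in\mathbb{Z}$, $BS(1,k)\models\gamma(b_1^n,b_1^l,b_1^m,b_1)$ iff $nl=m$. Define $\tau(x,y,h,b_1)=\alpha(x)\wedge\alpha(y)\wedge([h,b_1]=e)\wedge\beta(b_1)\wedge\forall v\,\forall w\,\big([v,b_1]=[w,b_1]=e\wedge\gamma(h,v,w,b_1)\rightarrow\exists u\,(\alpha(u)\wedge[v,y]=[w,x][v,[u,v]])\big)$. Then for $x,y,h,b_1\in BS(1,k)$, $BS(1,k)\models\tau(x,y,h,b_1)$ if and only if $b_1\in Ab$, $x=a^l$ and $y=a^t$ for some $l,t\in\mathbb{Z}[1/k]$, $h=b_1^z$ for some $z\in\mathbb{Z}$, and $l\cdot z=t$.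
   Context: $BS(1,k)=\langle a,b\mid b^{-1}ab=a^k\rangle$, identified with $\mathbb{Z}[1/k]\rtimes\mathbb{Z}$ (pairs $(y,m)$, $y\in\mathbb{Z}[1/k]=\{zk^i:z,i\in\mathbb{Z}\}$, product $(y_1,m_1)(y_2,m_2)=(y_1+y_2k^{-m_1},m_1+m_2)$), with $a=(1,0)$, $b=(0,1)$; $a^y=(y,0)$ for $y\in\mathbb{Z}[1/k]$. $Ab=\{a^yb:y\in\mathbb{Z}[1/k]\}$. The commutator is $[x,y]=x^{-1}y^{-1}xy$. *)

(* Defs.v *)
(* Model of BS(1,k) = Z[1/k] ⋊ Z as pairs (y,m) : rat * int,
   with the carrier cut out by the predicate [inBS k] (y in Z[1/k]). *)
From mathcomp Require Import all_boot all_order all_algebra.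
Set Implicit Arguments. Unset Strict Implicit. Unset Printing Implicit Defensive.
Import Order.TTheory GRing.Theory Num.Theory.
Local Open Scope ring_scope.

Definition inZk (k : nat) (q : rat) : Prop :=
  exists (z i : int), q = z%:~R * (k%:R : rat) ^ i.

Definition BSel := (rat * int)%type.

Definition inBS (k : nat) (g : BSel) : Prop := inZk k g.1.

Definition bsmul (k : nat) (g1 g2 : BSel) : BSel :=
  (g1.1 + g2.1 * (k%:R : rat) ^ (- g1.2), g1.2 + g2.2).
Definition bsone : BSel := (0, 0).
Definition bsinv (k : nat) (g : BSel) : BSel :=
  (- (g.1 * (k%:R : rat) ^ g.2), - g.2).

Definition bsexp (k : nat) (g : BSel) (n : int) : BSel :=
  match n with
  | Posz n => iter n (bsmul k g) bsone
  | Negz n => iter n.+1 (bsmul k (bsinv k g)) bsone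
  end.

Definition bsapow (y : rat) : BSel := (y, 0).
Definition bsb : BSel := (0, 1).

Definition bsconj (k : nat) (x y : BSel) : BSel :=
  bsmul k (bsmul k (bsinv k y) x) y.
Definition bscomm (k : nat) (x y : BSel) : BSel :=
  bsmul k (bsmul k (bsmul k (bsinv k x) (bsinv k y)) x) y.

Definition inAb (k : nat) (g : BSel) : Prop :=
  exists y, inZk k y /\ g = bsmul k (bsapow y) bsb.

Definition alpha (k : nat) (x : BSel) : Prop :=
  forall y, inBS k y -> bscomm k (bsconj k x y) x = bsone.

Definition beta (k : nat) (y : BSel) : Prop :=
  forall x, inBS k x -> alpha k x -> bsconj k x y = bsexp k x (Posz k).

Definition tau (k : nat) (gamma : BSel -> BSel -> BSel -> BSel -> Prop)
  (x y h b1 : BSel) : Prop :=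
  [/\ alpha k x, alpha k y, bscomm k h b1 = bsone, beta k b1 &
   forall v w, inBS k v -> inBS k w ->
     bscomm k v b1 = bsone -> bscomm k w b1 = bsone -> gamma h v w b1 ->
     exists u, inBS k u /\ alpha k u /\
       bscomm k v y = bsmul k (bscomm k w x) (bscomm k v (bscomm k u v))].

(* Main.v *)
Require Import Defs.
From mathcomp Require Import all_boot all_order all_algebra.
From mathcomp Require Import ring zify.
Import Order.TTheory GRing.Theory Num.Theory.
Local Open Scope ring_scope.

Section S.
Variable k : nat.
Hypothesis hk : (2 <= k)%N.
Local Notation K := (k%:R : rat).
Lemma KN0 : K != 0. Proof. by rewrite pnatr_eq0 -lt0n (leq_trans _ hk). Qed.
Lemma Kge0 : 0 <= K. Proof. by rewrite ler0n. Qed.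
Lemma KN1 : K != 1. Proof. rewrite pnatr_eq1; by case: k hk => [|[]]. Qed.
Lemma Kz_eq1 (m : int) : K ^ m = 1 -> m = 0.
Proof. by move/eqP; rewrite pexprz_eq1 ?Kge0 // (negbTE KN1) orbF => /eqP. Qed.
Lemma KzN0 (m : int) : K ^ m != 0. Proof. exact: expfz_neq0 KN0. Qed.
Lemma KzN (m : int) : K ^ (- m) = (K ^ m)^-1. Proof. by rewrite invr_expz. Qed.
Lemma KzD (m n : int) : K ^ (m + n) = K ^ m * K ^ n. Proof. exact: expfzDr KN0. Qed.

Ltac kn := rewrite /bscomm /bsconj /bsmul /bsinv /bsone /= ?oppr0 ?add0r ?addr0 ?opprD ?opprK ?KzD ?KzN ?expr0z ?expr1z.

Lemma alphaP (x : BSel) : alpha k x <-> x.2 = 0.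
Proof.
case: x => y m /=; split.
- move=> H. have : inBS k (1, 0) by exists 1, 0; rewrite expr0z mulr1.
  move/H; kn. case=> E _. apply: Kz_eq1.
  have : (K ^ m - 1) ^+ 2 = 0.
    apply/eqP; rewrite -oppr_eq0; apply/eqP; rewrite -E. field. by rewrite KzN0.
  by move/eqP; rewrite expf_eq0 /= subr_eq0 => /eqP.
- move=> -> [c n] _; kn. congr pair; [field; by rewrite KzN0 | ring].
Qed.

Definition Zk (q : rat) := exists n : nat, q * K ^+ n \is a Num.int.

Lemma KnN0 (n : nat) : K ^+ n != 0. Proof. by rewrite expf_neq0 // KN0. Qed.

Lemma inZkP q : inZk k q <-> Zk q.
Proof.
split.
- case=> z [[n|n] ->].
  + exists 0%N; rewrite expr0 mulr1 -exprnP. by rewrite rpredM ?intr_int ?rpredX ?natr_int.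
  + exists n.+1. rewrite NegzE KzN -exprnP -mulrA mulVf ?KnN0 // mulr1. exact: intr_int.
- case=> n /intrP [a Ha]. exists a, (- (n%:Z)). rewrite -Ha KzN -exprnP -mulrA mulfV ?KnN0 //.
  by rewrite mulr1.
Qed.

Lemma ZkD a b : Zk a -> Zk b -> Zk (a + b).
Proof.
case=> n Ha [m Hb]; exists (n + m)%N.
rewrite exprD (_ : (a + b) * _ = (a * K ^+ n) * K ^+ m + (b * K ^+ m) * K ^+ n); last by ring.
by rewrite rpredD // rpredM // rpredX // natr_int.
Qed.
Lemma ZkM a b : Zk a -> Zk b -> Zk (a * b).
Proof.
case=> n Ha [m Hb]; exists (n + m)%N.
rewrite exprD (_ : a * b * _ = (a * K ^+ n) * (b * K ^+ m)); first exact: rpredM. ring.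
Qed.
Lemma ZkN a : Zk a -> Zk (- a).
Proof. by case=> n Ha; exists n; rewrite mulNr rpredN. Qed.
Lemma Zk_int (z : int) : Zk z%:~R.
Proof. by exists 0%N; rewrite expr0 mulr1 intr_int. Qed.
Lemma ZkB a b : Zk a -> Zk b -> Zk (a - b).
Proof. by move=> ? ?; apply: ZkD => //; apply: ZkN. Qed.
Lemma ZkKz (m : int) : Zk (K ^ m).
Proof. by apply/inZkP; exists 1, m; rewrite mul1r. Qed.


Lemma int_ind3 (P : int -> Prop) : P 0 -> (forall m, P m -> P (m + 1)) ->
  (forall m, P m -> P (m - 1)) -> forall m, P m.
Proof.
move=> P0 Hs Hp [n|n].
- elim: n => // n IH. by rewrite -addn1 PoszD; apply: Hs.
- rewrite NegzE. elim: n => [|n IH]; first by rewrite -[- _]add0r; apply: Hp.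
  by rewrite -addn1 PoszD opprD; apply: Hp.
Qed.

Lemma KinvN1 : 1 - K^-1 != 0.
Proof. rewrite subr_eq0 eq_sym invr_eq1. exact: KN1. Qed.

Lemma KsubN0 : K - 1 != 0. Proof. by rewrite subr_eq0 KN1. Qed.
Ltac side := rewrite ?KzN0 ?KN0 ?KsubN0 ?KinvN1 ?KnN0.

Ltac finp := congr pair; first [done | ring | (field; by side)].

Definition S (m : int) : rat := (1 - K ^ (- m)) / (1 - K^-1).

Lemma Sstep m : S (m + 1) = 1 + S m * K^-1.
Proof.
rewrite /S opprD KzD KzN exprN1. field; by side.
Qed.

Lemma SstepN m : S (m - 1) = (S m - 1) * K.
Proof. rewrite -[in RHS](subrK 1 m) Sstep. field; by side. Qed.

Lemma ZkS m : Zk (S m).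
Proof.
elim/int_ind3: m.
- by rewrite /S oppr0 expr0z subrr mul0r; apply: (Zk_int 0).
- move=> m H; rewrite Sstep; apply: ZkD; first exact: (Zk_int 1).
  apply: ZkM => //; rewrite -exprN1; exact: ZkKz.
- move=> m H. rewrite SstepN.
  apply: ZkM; [apply: ZkB => //; exact: (Zk_int 1) | exact: (ZkKz 1)].
Qed.

Lemma bsexp_b c m : bsexp k (c, 1) m = (c * S m, m).
Proof.
case: m => n.
- elim: n => [|n IH]; first by rewrite /= /S oppr0 expr0z subrr mul0r mulr0.
  have -> : bsexp k (c,1) n.+1 = bsmul k (c,1) (bsexp k (c,1) n) by [].
  rewrite IH /bsmul /= -addn1 PoszD Sstep addrC exprN1. congr pair; [field; by side | by rewrite addrC].
- change (iter n.+1 (bsmul k (bsinv k (c,1))) bsone = (c * S (Negz n), Negz n)).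
  elim: n => [|n IH].
    rewrite NegzE /= /bsmul /bsinv /bsone /S /=. rewrite mul0r !addr0 opprK !expr1z. finp.
  rewrite iterS IH !NegzE /bsmul /bsinv /=.
  have E : (- (n.+2 : int)) = - (n.+1 : int) - 1 by rewrite intS opprD addrC.
  have E1 : (- (-1) : int) = 1 by [].
  rewrite E SstepN expr1z. finp.
Qed.

Lemma comm_A e p t : bscomm k (e, p) (t, 0) = (t * (1 - K ^ p), 0).
Proof. kn; finp. Qed.
Lemma comm_A2 s e p : bscomm k (s, 0) (e, p) = (s * (K ^ p - 1), 0).
Proof. kn; finp. Qed.
Lemma mul_AA a b : bsmul k (a, 0) (b, 0) = (a + b, 0).
Proof. kn; finp. Qed.

Lemma bsexp_a y (n : nat) : bsexp k (y, 0) n = (y * n%:R, 0).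
Proof.
elim: n => [|n IH]; first by rewrite /= mulr0.
have -> : bsexp k (y,0) n.+1 = bsmul k (y,0) (bsexp k (y,0) n) by [].
rewrite IH; kn. rewrite mulr1 -addn1 natrD. finp.
Qed.

Lemma betaP b : beta k b <-> b.2 = 1.
Proof.
case: b => c m /=; split.
- move=> H. have h1 : inBS k (1, 0) by exists 1, 0; rewrite expr0z mulr1.
  have := H _ h1 (proj2 (alphaP (1,0)) erefl). rewrite bsexp_a; kn. case=> E _.
  have : K ^ (m - 1) = 1.
    have E2 : K ^ m = K by rewrite -[RHS]mul1r -E; ring.
    rewrite KzD exprN1 E2. field; by side.
  by move/Kz_eq1/eqP; rewrite subr_eq0 => /eqP.

- move=> -> [y n] _ /alphaP /= ->. change (iter k _ bsone) with (bsexp k (y,0) (Posz k)). rewrite bsexp_a. kn. finp.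
Qed.

Lemma commP c d n : bscomm k (d, n) (c, 1) = bsone <-> (d, n) = bsexp k (c, 1) n.
Proof.
rewrite bsexp_b; split.
- kn. case=> E _. congr pair. apply/eqP. rewrite -subr_eq0.
  have : (d - c * S n) * (K ^ n * (K - 1)) = 0.
    rewrite -E /S KzN. field. by side.
  move/eqP; rewrite mulf_eq0 => /orP [//|]. by rewrite mulf_eq0 (negbTE (KzN0 n)) (negbTE KsubN0).
- move=> [] ->. rewrite /S; kn. finp.
Qed.
Lemma nt (a b : int) (m n : nat) :
  a * (k ^ m)%N%:Z = b * (k ^ n)%N%:Z * (1 - (k ^ (`|a|.+1))%N%:Z) -> a = 0.
Proof.
set p := `|a|.+1 => E.
have kp1 : (1 <= k ^ p)%N by rewrite expn_gt0 (leq_trans _ hk).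
have H1 : (`|a| * k ^ m = `|b| * k ^ n * (k ^ p - 1))%N.
  have := congr1 absz E. rewrite !abszM !absz_nat.
  by rewrite -(opprB (k ^ p)%N%:Z) subzn // abszN absz_nat.
have cop : coprime (k ^ p - 1) (k ^ m).
  apply: coprimeXr. apply: (@coprime_dvdr _ (k ^ p)); first by rewrite dvdn_exp.
  by rewrite subn1 coprimePn.
have dv : (k ^ p - 1 %| `|a|)%N.
  by rewrite -(Gauss_dvdl _ cop) H1 dvdn_mull.
have lt : (p < k ^ p)%N by apply: ltn_expl.
apply/eqP; rewrite -absz_eq0; apply/negPn/negP; rewrite -lt0n => a0.
have := dvdn_leq a0 dv. rewrite /p in lt *. lia.
Qed.
Lemma d0 d : Zk d -> (forall p : nat, (0 < p)%N -> exists q, Zk q /\ d = q * (1 - K ^+ p)) -> d = 0.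
Proof.
case=> n /intrP [a Ha] H.
have [q [[m /intrP [b Hb]] Hq]] := H `|a|.+1 isT.
have E : ((a * (k ^ m)%N%:Z)%:~R : rat) = ((b * (k ^ n)%N%:Z * (1 - (k ^ `|a|.+1)%N%:Z))%:~R).
  rewrite !intrM intrB.
  change (a%:~R * (k ^ m)%N%:R = b%:~R * (k ^ n)%N%:R * (1 - (k ^ `|a|.+1)%N%:R) :> rat).
  rewrite !natrX -Ha -Hb Hq. ring.
have a0 := @nt a b m n (intr_inj E).
move: Ha; rewrite a0 => /eqP; rewrite mulf_eq0 (negbTE (KnN0 n)) orbF => /eqP //.
Qed.
Definition Hf (X : rat) (m : int) := (1 - X ^ m) / (1 - X).
Definition Gf (X : rat) (m : int) := (1 - X ^ m - m%:~R * (1 - X)) / (1 - X) ^+ 2.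

Lemma XN1 (p : int) : p != 0 -> 1 - K ^ p != 0.
Proof. move=> p0; rewrite subr_eq0 eq_sym; apply/eqP => /Kz_eq1 E; by rewrite E eqxx in p0. Qed.

Lemma ZkX p m : Zk ((K ^ p) ^ m). Proof. rewrite exprz_exp; exact: ZkKz. Qed.

Lemma ZkHf (p m : int) : p != 0 -> Zk (Hf (K ^ p) m).
Proof.
move=> p0; have X1 := @XN1 p p0; have X0 := KzN0 p.
elim/int_ind3: m.
- by rewrite /Hf expr0z subrr mul0r; exact: (Zk_int 0).
- move=> m H. have -> : Hf (K ^ p) (m + 1) = Hf (K ^ p) m + (K ^ p) ^ m.
    rewrite /Hf expfzDr ?expr1z //. field. by rewrite X1.
  by apply: ZkD => //; exact: ZkX.
- move=> m H. have -> : Hf (K ^ p) (m - 1) = Hf (K ^ p) m - (K ^ p) ^ (m - 1).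
    rewrite /Hf expfzDr ?exprN1 //. field. by rewrite X1 X0.
  by apply: ZkB => //; exact: ZkX.
Qed.

Lemma ZkGf (p m : int) : p != 0 -> Zk (Gf (K ^ p) m).
Proof.
move=> p0; have X1 := @XN1 p p0; have X0 := KzN0 p.
elim/int_ind3: m.
- rewrite /Gf expr0z subrr mul0r sub0r oppr0 mul0r; exact: (Zk_int 0).
- move=> m H. have -> : Gf (K ^ p) (m + 1) = Gf (K ^ p) m - Hf (K ^ p) m.
    rewrite /Gf /Hf expfzDr ?expr1z // intrD. field. by rewrite X1.
  by apply: ZkB => //; exact: ZkHf.
- move=> m H. have -> : Gf (K ^ p) (m - 1) = Gf (K ^ p) m + Hf (K ^ p) (m - 1).
    rewrite /Gf /Hf !expfzDr ?exprN1 // intrB. field. by rewrite X1 X0.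
  by apply: ZkD => //; exact: ZkHf.
Qed.

Lemma Gf_id X z : 1 - X != 0 -> 1 - X ^ z = z%:~R * (1 - X) + Gf X z * (1 - X) ^+ 2.
Proof. move=> X1; rewrite /Gf; field. by rewrite X1. Qed.
End S.

Theorem lemma4p8 (k : nat) (hk : (2 <= k)%N)
  (gamma : BSel -> BSel -> BSel -> BSel -> Prop)
  (hgamma : forall b1, inAb k b1 -> forall n l m : int,
      gamma (bsexp k b1 n) (bsexp k b1 l) (bsexp k b1 m) b1 <-> n * l = m)
  (x y h b1 : BSel) (hx : inBS k x) (hy : inBS k y) (hh : inBS k h)
  (hb1 : inBS k b1) :
  tau k gamma x y h b1 <->
  (inAb k b1 /\
   exists l t : rat, [/\ inZk k l, inZk k t, x = bsapow l, y = bsapow t &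
     exists z : int, h = bsexp k b1 z /\ l * z%:~R = t]).
Proof.
have Zk_ := inZkP k hk. have bE := bsexp_b k hk.
split.
- case: x hx => l xm hx; case: y hy => t ym hy; case: b1 hb1 hgamma => c bm hb1 hgamma.
  case: h hh => d n hh.
  case=> /(alphaP k hk) /= xm0 /(alphaP k hk) /= ym0 hc /(betaP k hk) /= bm1 hall.
  subst xm ym bm.
  have hE := proj1 (commP k hk c d n) hc.
  have Ab : inAb k (c, 1).
    exists c; split; first exact: hb1.
    by rewrite /bsmul /bsapow /bsb /= mul0r addr0 add0r.
  split => //. exists l, t. split => //. exists n; split => //.
  apply/eqP; rewrite eq_sym -subr_eq0; apply/eqP.
  apply: (d0 k hk); first by apply: ZkB; [apply/Zk_; exact: hy | apply: ZkM; [apply/Zk_; exact: hx | exact: Zk_int]].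
  move=> p p0.
  have hv : inBS k (bsexp k (c, 1) p).
    rewrite bE /inBS /=; apply/Zk_; apply: ZkM; [apply/Zk_; exact: hb1 | exact: ZkS].
  have hw : inBS k (bsexp k (c, 1) (n * p)).
    rewrite bE /inBS /=; apply/Zk_; apply: ZkM; [apply/Zk_; exact: hb1 | exact: ZkS].
  have cv : bscomm k (bsexp k (c, 1) p) (c, 1) = bsone.
    by rewrite [bsexp _ _ p]bE; apply/commP => //; rewrite bE.
  have cw : bscomm k (bsexp k (c, 1) (n * p)) (c, 1) = bsone.
    by rewrite [bsexp _ _ (n * p)]bE; apply/commP => //; rewrite bE.
  have g : gamma (d, n) (bsexp k (c, 1) p) (bsexp k (c, 1) (n * p)) (c, 1).
    by rewrite hE; apply/(hgamma _ Ab).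
  have [[s um] [hu [hau Eq]]] := hall _ _ hv hw cv cw g.
  have /= um0 := proj1 (alphaP k hk _) hau.
  subst um.
  move: Eq; rewrite !bE comm_A2 // !comm_A // mul_AA => -[Eq].
  set X := (k%:R : rat) ^ (p : int).
  have pn0 : (p : int) != 0 by rewrite eqz_nat -lt0n.
  have X1 := XN1 k hk (p : int) pn0.
  exists (l * Gf X n - s); split.
    apply: ZkB; [apply: ZkM; [apply/Zk_; exact: hx | exact: (ZkGf k hk (p : int) n pn0)] | apply/Zk_; exact: hu].
  have -> : (k%:R : rat) ^+ p = X by rewrite /X exprnP.
  apply: (mulIf X1).
  have E2 : (k%:R : rat) ^ (n * p) = X ^ n by rewrite /X exprz_exp mulrC.
  rewrite E2 (Gf_id X n X1) in Eq.
  rewrite mulrBl Eq /X. ring.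
- case=> -[c [hc ->]] [l [t [zl zt -> -> [z [-> lt]]]]].
  have -> : bsmul k (bsapow c) bsb = (c, 1).
    by rewrite /bsmul /bsapow /bsb /= mul0r addr0 add0r.
  have Ab : inAb k (c, 1).
    exists c; split => //. by rewrite /bsmul /bsapow /bsb /= mul0r addr0 add0r.
  split.
  + exact/(alphaP k hk).
  + exact/(alphaP k hk).
  + by rewrite bE; apply/(commP k hk); rewrite bE.
  + exact/(betaP k hk).
  + case=> e p [f q] hv hw cv cw.
    have Ev := proj1 (commP k hk c e p) cv.
    have Ew := proj1 (commP k hk c f q) cw.
    rewrite Ev Ew => /(hgamma _ Ab) zpq.
    rewrite -Ev ?bE.
    have [p0|pn0] := eqVneq p 0.
    * exists (0, 0); split; first by exists 0, 0; rewrite mul0r.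
      split; first exact/(alphaP k hk).
      rewrite -zpq p0 mulr0 comm_A2 // !comm_A // mul_AA expr0z !subrr !mulr0 addr0.
      by [].    
    * have X1 := XN1 k hk p pn0.
      exists (l * Gf (k%:R ^ p) z, 0); split.
        apply/Zk_; apply: ZkM; [exact/Zk_ | exact: ZkGf].
      split; first exact/(alphaP k hk).
      rewrite comm_A2 // !comm_A // mul_AA.
      rewrite -zpq (mulrC z p) -exprz_exp (Gf_id _ z X1) -lt. congr pair. ring.
Qed.
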